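(* Let $G$ be a grid-labelled graph of type $(3,3)$ all of whose edges are diagonal. Then $G$ satisfies the degree criterion if and only if $E(G)$ can be partitioned into edge sets of subgraphs $X_1,\dots,X_n$ each of which is locally isomorphic to a rotation of one of the building blocks $B_2,B_3,B_4,B_5$.
   Context: A grid-labelled graph of type $(a,b)$ is a simple graph whose vertex set is the grid $[a]\times[b]$. An edge $\{(i,j),(k,l)\}$ is diagonal if $i\neq k$ and $j\neq l$. The partial transpose $\Gamma(G)$ is the grid-labelled graph with edge set $\{\{(k,j),(i,l)\}:\{(i,j),(k,l)\}\in E(G)\}$; $G$ satisfies the degree criterion if every vertex has the same degree in $G$ and in $\Gamma(G)$. Two grid-labelled graphs $G,H$ of type $(a,b)$ are locally isomorphic if there are permutations $\pi$ of $[a]$ and $\sigma$ of $[b]$ with $\{(i,j),(k,l)\}\in E(G)\iff\{(\pi(i),\sigma(j)),(\pi(k),\sigma(l))\}\in E(H)$. A rotation of a type $(3,3)$ graph is its image under a power (including the identity) of the map $(i,j)\mapsto(j,4-i)$ on vertices. Building blocks (type $(3,3)$): $B_2$ with edges $\{(1,1),(2,2)\},\{(1,2),(2,1)\}$; $B_3$ with edges $\{(1,1),(2,2)\},\{(1,2),(2,3)\},\{(2,1),(1,3)\}$; $B_4$ with edges $\{(1,1),(2,3)\},\{(2,1),(3,3)\},\{(1,2),(3,1)\},\{(1,3),(3,2)\}$; $B_5$ with edges $\{(1,1),(3,3)\},\{(1,2),(2,1)\},\{(1,3),(2,2)\},\{(2,2),(3,1)\},\{(2,3),(3,2)\}$.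 *)

(* Defs.v *)
(* Vertices of the 3x3 grid are 'I_3 * 'I_3 (0-indexed:
   paper's (i,j) is our (i-1, j-1)). A grid-labelled graph is a set of
   edges, each edge a 2-element vertex set. *)
From HB Require Import structures.
From mathcomp Require Import all_boot all_order all_fingroup.
Set Implicit Arguments. Unset Strict Implicit. Unset Printing Implicit Defensive.

Definition V := ('I_3 * 'I_3)%type.
Definition graph := {set {set V}}.

Definition simple_graph (G : graph) : Prop := forall e, e \in G -> #|e| = 2.

Definition diag_pair (u v : V) : bool := (u.1 != v.1) && (u.2 != v.2).

Definition all_diagonal (G : graph) : Prop :=
  forall e, e \in G -> exists u v, e = [set u; v] /\ diag_pair u v.

(* partial transpose: {(i,j),(k,l)} |-> {(k,j),(i,l)} *)
Definition ptrans (G : graph) : graph :=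
  [set [set (p.2.1, p.1.2); (p.1.1, p.2.2)]
    | p in [set p : V * V | [set p.1; p.2] \in G]].

Definition deg (G : graph) (u : V) : nat := #|[set v : V | [set u; v] \in G]|.

Definition degree_criterion (G : graph) : Prop :=
  forall u : V, deg G u = deg (ptrans G) u.

Definition loc_map (p s : {perm 'I_3}) (u : V) : V := (p u.1, s u.2).

Definition locally_iso (G H : graph) : Prop :=
  exists (p s : {perm 'I_3}), forall u v : V,
    ([set u; v] \in G) = ([set loc_map p s u; loc_map p s v] \in H).

Definition gmap (f : V -> V) (G : graph) : graph := [set (f @: e) | e : {set V} in G].

(* (i,j) |-> (j, 4-i) in 1-indexed coordinates, i.e. (i,j) |-> (j, 2-i) *)
Definition rot (u : V) : V := (u.2, rev_ord u.1).

Definition rotation (k : nat) (G : graph) : graph := gmap (iter k rot) G.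

Definition vx (i j : nat) : V := (inord i, inord j).
Definition ed (i j k l : nat) : {set V} := [set vx i j; vx k l].

Definition B2 : graph := [set ed 0 0 1 1; ed 0 1 1 0].
Definition B3 : graph := [set ed 0 0 1 1; ed 0 1 1 2; ed 1 0 0 2].
Definition B4 : graph := [set ed 0 0 1 2; ed 1 0 2 2; ed 0 1 2 0; ed 0 2 2 1].
Definition B5 : graph :=
  [set ed 0 0 2 2; ed 0 1 1 0; ed 0 2 1 1; ed 1 1 2 0; ed 1 2 2 1].

Definition is_block (B : graph) : Prop :=
  B = B2 \/ B = B3 \/ B = B4 \/ B = B5.

Definition good_piece (X : graph) : Prop :=
  exists B k, is_block B /\ locally_iso X (rotation k B).

(* Main.v *)
Require Import Defs.
From mathcomp Require Import all_boot all_order all_fingroup.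
Set Implicit Arguments. Unset Strict Implicit. Unset Printing Implicit Defensive.

Definition o0 : 'I_3 := @Ordinal 3 0 isT.
Definition o1 : 'I_3 := @Ordinal 3 1 isT.
Definition o2 : 'I_3 := @Ordinal 3 2 isT.
Definition enumV : seq V := [:: (o0,o0);(o0,o1);(o0,o2);(o1,o0);(o1,o1);(o1,o2);(o2,o0);(o2,o1);(o2,o2)].
Definition eid (i j : nat) : nat :=
  match i with
  | 0 => match j with 0 => 18 | 1 => 18 | 2 => 18 | 3 => 18 | 4 => 0 | 5 => 1 | 6 => 18 | 7 => 2 | 8 => 3 | _ => 18 end
  | 1 => match j with 0 => 18 | 1 => 18 | 2 => 18 | 3 => 4 | 4 => 18 | 5 => 5 | 6 => 6 | 7 => 18 | 8 => 7 | _ => 18 end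
  | 2 => match j with 0 => 18 | 1 => 18 | 2 => 18 | 3 => 8 | 4 => 9 | 5 => 18 | 6 => 10 | 7 => 11 | 8 => 18 | _ => 18 end
  | 3 => match j with 0 => 18 | 1 => 4 | 2 => 8 | 3 => 18 | 4 => 18 | 5 => 18 | 6 => 18 | 7 => 12 | 8 => 13 | _ => 18 end
  | 4 => match j with 0 => 0 | 1 => 18 | 2 => 9 | 3 => 18 | 4 => 18 | 5 => 18 | 6 => 14 | 7 => 18 | 8 => 15 | _ => 18 end
  | 5 => match j with 0 => 1 | 1 => 5 | 2 => 18 | 3 => 18 | 4 => 18 | 5 => 18 | 6 => 16 | 7 => 17 | 8 => 18 | _ => 18 end
  | 6 => match j with 0 => 18 | 1 => 6 | 2 => 10 | 3 => 18 | 4 => 14 | 5 => 16 | 6 => 18 | 7 => 18 | 8 => 18 | _ => 18 end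
  | 7 => match j with 0 => 2 | 1 => 18 | 2 => 11 | 3 => 12 | 4 => 18 | 5 => 17 | 6 => 18 | 7 => 18 | 8 => 18 | _ => 18 end
  | 8 => match j with 0 => 3 | 1 => 7 | 2 => 18 | 3 => 13 | 4 => 15 | 5 => 18 | 6 => 18 | 7 => 18 | 8 => 18 | _ => 18 end
  | _ => 18 end.

Definition idx (u : V) : nat := 3 * u.1 + u.2.
Definition Eb (b : seq bool) (u v : V) : bool := nth false b (eid (idx u) (idx v)).
Definition critb (E : V -> V -> bool) : bool :=
  all (fun u => count (E u) enumV == count (fun v => E (v.1, u.2) (u.1, v.2)) enumV) enumV.
Fixpoint chk (n : nat) (acc : seq bool) (f : seq bool -> bool) : bool :=
  match n with 0 => f acc | n.+1 => chk n (true :: acc) f && chk n (false :: acc) f end.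
Definition critf' := Eval vm_compute in (fun b0 b1 b2 b3 b4 b5 b6 b7 b8 b9 b10 b11 b12 b13 b14 b15 b16 b17 : bool => critb (Eb [:: b0;b1;b2;b3;b4;b5;b6;b7;b8;b9;b10;b11;b12;b13;b14;b15;b16;b17])).
Definition critf (b : seq bool) : bool := match b with [:: b0;b1;b2;b3;b4;b5;b6;b7;b8;b9;b10;b11;b12;b13;b14;b15;b16;b17] => critf' b0 b1 b2 b3 b4 b5 b6 b7 b8 b9 b10 b11 b12 b13 b14 b15 b16 b17 | _ => false end.
Lemma critfE b0 b1 b2 b3 b4 b5 b6 b7 b8 b9 b10 b11 b12 b13 b14 b15 b16 b17 : critb (Eb [:: b0;b1;b2;b3;b4;b5;b6;b7;b8;b9;b10;b11;b12;b13;b14;b15;b16;b17]) = critf [:: b0;b1;b2;b3;b4;b5;b6;b7;b8;b9;b10;b11;b12;b13;b14;b15;b16;b17].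
Proof. by vm_compute. Qed.
Definition DE : seq (V * V) := [:: ((o0,o0),(o1,o1)); ((o0,o0),(o1,o2)); ((o0,o0),(o2,o1)); ((o0,o0),(o2,o2)); ((o0,o1),(o1,o0)); ((o0,o1),(o1,o2)); ((o0,o1),(o2,o0)); ((o0,o1),(o2,o2)); ((o0,o2),(o1,o0)); ((o0,o2),(o1,o1)); ((o0,o2),(o2,o0)); ((o0,o2),(o2,o1)); ((o1,o0),(o2,o1)); ((o1,o0),(o2,o2)); ((o1,o1),(o2,o0)); ((o1,o1),(o2,o2)); ((o1,o2),(o2,o0)); ((o1,o2),(o2,o1))].
Definition bl0 : seq (V*V) := [:: ((o0,o0),(o1,o1)); ((o0,o1),(o1,o0))].
Definition bl1 : seq (V*V) := [:: ((o0,o0),(o1,o1)); ((o0,o1),(o1,o2)); ((o1,o0),(o0,o2))].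
Definition bl2 : seq (V*V) := [:: ((o0,o0),(o1,o2)); ((o1,o0),(o2,o2)); ((o0,o1),(o2,o0)); ((o0,o2),(o2,o1))].
Definition bl3 : seq (V*V) := [:: ((o0,o0),(o2,o2)); ((o0,o1),(o1,o0)); ((o0,o2),(o1,o1)); ((o1,o1),(o2,o0)); ((o1,o2),(o2,o1))].
Definition blist (n : nat) := match n with 0 => bl0 | 1 => bl1 | 2 => bl2 | _ => bl3 end.
Definition blockE (n : nat) (x y : V) : bool :=
  has (fun e => ((x == e.1) && (y == e.2)) || ((x == e.2) && (y == e.1))) (blist n).
Definition irot (w : V) : V := (rev_ord w.2, w.1).
Definition o_ (n : nat) : 'I_3 := match n with 0 => o0 | 1 => o1 | _ => o2 end.
Definition pt (i : nat) : nat * nat * nat :=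
  match i with 0 => (0,1,2) | 1 => (0,2,1) | 2 => (1,0,2) | 3 => (1,2,0) | 4 => (2,0,1) | _ => (2,1,0) end.
Definition pfun (i : nat) (x : 'I_3) : 'I_3 :=
  match nat_of_ord x with 0 => o_ (pt i).1.1 | 1 => o_ (pt i).1.2 | _ => o_ (pt i).2 end.
Definition desc := (nat * nat * nat * nat)%type.
Definition lmc (d : desc) (u : V) : V := (pfun d.1.2 u.1, pfun d.2 u.2).
Definition EPc (d : desc) (u v : V) : bool :=
  blockE d.1.1.1 (iter d.1.1.2 irot (lmc d u)) (iter d.1.1.2 irot (lmc d v)).
Definition descs : seq (nat*nat*nat*nat) := [:: (0,0,0,0); (0,0,0,1); (0,0,0,4); (0,0,1,0); (0,0,1,1); (0,0,1,4); (0,0,4,0); (0,0,4,1); (0,0,4,4); (1,0,0,0); (1,0,0,1); (1,0,1,0); (1,0,1,1); (1,0,4,0); (1,0,4,1); (1,1,0,0); (1,1,0,1); (1,1,0,2); (1,1,0,3); (1,1,0,4); (1,1,0,5); (2,0,0,0); (2,0,0,1); (2,0,0,2); (2,0,0,3); (2,0,0,4); (2,0,0,5); (2,0,1,0); (2,0,1,1); (2,0,1,2); (2,0,1,3); (2,0,1,4); (2,0,1,5); (2,0,2,0); (2,0,2,1); (2,0,2,2); (2,0,2,3); (2,0,2,4); (2,0,2,5); (3,0,0,0); (3,0,0,1); (3,0,0,2); (3,0,0,3); (3,0,0,4); (3,0,0,5); (3,0,1,0); (3,0,1,1); (3,0,1,2); (3,0,1,3); (3,0,1,4); (3,0,1,5);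 (3,0,2,0); (3,0,2,1); (3,0,2,2); (3,0,2,3); (3,0,2,4); (3,0,2,5)].
Definition maskOf (d : desc) : seq bool := [seq EPc d e.1 e.2 | e <- DE].
Definition PT : seq (desc * seq bool) := Eval vm_compute in [seq (d, maskOf d) | d <- descs].
Definition PTok : bool := all (fun dm => (size dm.2 == 18) &&
   all (fun u => all (fun v => EPc dm.1 u v == Eb dm.2 u v) enumV) enumV) PT.
Lemma PTokT : PTok. Proof. by vm_compute. Qed.
Definition subm (m b : seq bool) := all (fun x => ~~ x.1 || x.2) (zip m b).
Definition minus (b m : seq bool) := [seq x.1 && ~~ x.2 | x <- zip b m].
Fixpoint decomp (fuel : nat) (b : seq bool) : option (seq (desc * seq bool)) :=
  if ~~ has id b then Some [::] else
  match fuel with 0 => None | f.+1 =>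
   let k := find id b in
   let fix go l := match l with [::] => None | dm :: l' =>
     if nth false dm.2 k && subm dm.2 b then
       match decomp f (minus b dm.2) with Some L => Some (dm :: L) | None => go l' end
     else go l' end in go PT
  end.
Definition dec_ok (b : seq bool) (L : seq (desc * seq bool)) : bool :=
  all (fun dm => dm \in PT) L &&
  all (fun k => count (fun dm => nth false dm.2 k) L == nth false b k) (iota 0 18).
Definition leaf (b : seq bool) : bool :=
  if critf b then (if decomp 18 b is Some L then dec_ok b L else false) else true.
Lemma bigcheck : chk 18 [::] leaf.
Proof. vm_compute. reflexivity. Qed.


Lemma mem_enumV (u : V) : u \in enumV.
Proof. by case: u => [[[|[|[|i]]] Hi] [[|[|[|j]]] Hj]]. Qed.

Lemma uniq_enumV : uniq enumV. Proof. by []. Qed.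

Lemma sum_count (T : Type) (s : seq T) (F : T -> bool) :
  \sum_(x <- s) (F x : nat) = count F s.
Proof. by elim: s => [|x s IH]; rewrite ?big_nil ?big_cons //= IH. Qed.

Lemma sumV (F : V -> bool) : \sum_(v : V) (F v : nat) = count F enumV.
Proof.
rewrite -sum_count; apply: perm_big; apply: uniq_perm.
- exact: index_enum_uniq.
- exact: uniq_enumV.
- by move=> x; rewrite mem_index_enum mem_enumV.
Qed.

Lemma card_sum (F : V -> bool) : #|[set v | F v]| = \sum_(v : V) (F v : nat).
Proof. by rewrite -sum1dep_card big_mkcond; apply: eq_bigr => v _; case: (F v). Qed.

Lemma set2_eqE (x y a b : V) : a != b ->
  ([set x; y] == [set a; b]) = ((x == a) && (y == b)) || ((x == b) && (y == a)).
Proof.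
move=> nab; apply/idP/idP.
- rewrite eqEsubset !subUset !sub1set !inE => /andP[/andP[xab yab] /andP[axy bxy]].
  case/orP: xab => /eqP xa; subst x.
  + by rewrite eqxx /=; case/orP: bxy => /eqP bE; [by rewrite bE eqxx in nab | by rewrite bE eqxx].
  + case/orP: axy => /eqP aE; first by rewrite aE eqxx in nab.
    by rewrite aE !eqxx orbT.
- by case/orP => /andP[/eqP -> /eqP ->]; rewrite // setUC.
Qed.

Lemma diag_sym (a b : V) : diag_pair a b = diag_pair b a.
Proof. by rewrite /diag_pair eq_sym (eq_sym a.2). Qed.

Lemma diag_neq (a b : V) : diag_pair a b -> a != b.
Proof. by case/andP=> H _; apply: contraNneq H => ->. Qed.

Lemma diag_mem (G : graph) (a b : V) : all_diagonal G -> [set a; b] \in G -> diag_pair a b.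
Proof.
move=> HG /HG [u [v [E D]]]; move/eqP: E; rewrite set2_eqE ?diag_neq //.
by case/orP=> /andP[/eqP -> /eqP ->]; rewrite // diag_sym.
Qed.

Lemma imset_pair (f : V -> V) (a b : V) : f @: [set a; b] = [set f a; f b].
Proof. by rewrite imsetU1 imset_set1. Qed.

Lemma ptransE (G : graph) (u v : V) : all_diagonal G ->
  ([set u; v] \in ptrans G) = ([set (v.1, u.2); (u.1, v.2)] \in G).
Proof.
move=> HG; apply/imsetP/idP.
- case=> [[a b]]; rewrite inE /= => Hab /eqP E.
  have D := diag_mem HG Hab.
  have nxy : (b.1, a.2) != (a.1, b.2).
    by case/andP: D => D1 _; apply: contraNneq D1 => -[->].
  move: E; rewrite set2_eqE //; case/orP=> /andP[/eqP -> /eqP ->] /=.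
  + by rewrite -!surjective_pairing.
  + by rewrite -!surjective_pairing setUC.
- move=> H; exists ((v.1, u.2), (u.1, v.2)); first by rewrite inE.
  by rewrite /= -!surjective_pairing.
Qed.

Lemma critG (G : graph) : all_diagonal G ->
  degree_criterion G <-> forall u : V,
    \sum_(v : V) ([set u; v] \in G : nat) = \sum_(v : V) ([set (v.1, u.2); (u.1, v.2)] \in G : nat).
Proof.
move=> HG; rewrite /degree_criterion /deg; split=> H u; move: (H u).
- rewrite !card_sum => ->; apply: eq_bigr => v _; by rewrite ptransE.
- rewrite !card_sum => ->; apply: eq_bigr => v _; by rewrite ptransE.
Qed.


Lemma rotK : cancel Defs.rot irot.
Proof. by case=> a b; rewrite /irot /Defs.rot /= rev_ordK. Qed.
Lemma irotK : cancel irot Defs.rot.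
Proof. by case=> a b; rewrite /irot /Defs.rot /= rev_ordK. Qed.

Lemma iterK (T : Type) (f g : T -> T) k : cancel f g -> cancel (iter k f) (iter k g).
Proof. move=> fK; elim: k => // k IH x; by rewrite [iter k.+1 f x]iterS iterSr fK IH. Qed.

Lemma gmap_mem (f g : V -> V) (B : graph) x y : cancel f g -> cancel g f ->
  ([set x; y] \in gmap f B) = ([set g x; g y] \in B).
Proof.
move=> fK gK; apply/imsetP/idP.
- case=> e eB E; rewrite -(@imset_pair g x y) E -imset_comp (eq_imset _ fK) imset_id //.
- move=> H; exists [set g x; g y] => //; by rewrite imset_pair !gK.
Qed.

Lemma inordo i : i < 3 -> inord i = o_ i :> 'I_3.
Proof. by case: i => [|[|[|i]]] // _; apply/val_inj; rewrite /= inordK. Qed.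

Definition Bof (n : nat) : graph := match n with 0 => B2 | 1 => B3 | 2 => B4 | _ => B5 end.

Lemma Bof_mem n x y : ([set x; y] \in Bof n) = blockE n x y.
Proof.
case: n => [|[|[|n]]]; rewrite /Bof /B2 /B3 /B4 /B5 /ed /vx /blockE /blist !inordo //=
  !inE !set2_eqE //= ?orbF ?orbA //.
Qed.

Lemma memH n k x y : ([set x; y] \in rotation k (Bof n)) =
   blockE n (iter k irot x) (iter k irot y).
Proof. by rewrite /rotation (@gmap_mem _ (iter k irot)) ?Bof_mem //; apply: iterK; [exact: rotK | exact: irotK]. Qed.


Lemma pfun_inj i : injective (pfun i).
Proof.
move=> x y; case: x => [[|[|[|x]]] Hx] //; case: y => [[|[|[|y]]] Hy] //;
case: i => [|[|[|[|[|i]]]]] /= /(congr1 val) /= E; apply/val_inj => /=; congruence.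
Qed.

Definition Pp (i : nat) : {perm 'I_3} := perm (@pfun_inj i).

Lemma lm_inj (p s : {perm 'I_3}) : injective (loc_map p s).
Proof. by move=> [a b] [c d] [/perm_inj -> /perm_inj ->]. Qed.

Lemma irot4 x : iter 4 irot x = x.
Proof. by case: x => a b; rewrite /= /irot /= !rev_ordK. Qed.

Lemma iter_mod4 k x : iter k irot x = iter (k %% 4) irot x.
Proof.
rewrite {1}(divn_eq k 4) iterD.
elim: (k %/ 4) (iter (k %% 4) irot x) => // q IH y; by rewrite mulSn iterD IH irot4.
Qed.

Definition blockcheck : bool :=
  all (fun n => all (fun k => all (fun x =>
    count (fun w => blockE n (iter k irot x) (iter k irot w)) enumV ==
    count (fun w => blockE n (iter k irot (w.1, x.2)) (iter k irot (x.1, w.2))) enumV) enumV)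
    (iota 0 4)) (iota 0 4).
Lemma blockcheckT : blockcheck. Proof. by vm_compute. Qed.

Lemma block_bal n k x :
  \sum_(w : V) ([set x; w] \in rotation k (Bof n) : nat) =
  \sum_(w : V) ([set (w.1, x.2); (x.1, w.2)] \in rotation k (Bof n) : nat).
Proof.
under eq_bigr do rewrite memH iter_mod4 [iter k _ _]iter_mod4.
under [RHS]eq_bigr do rewrite memH iter_mod4 [iter k _ _]iter_mod4.
rewrite !sumV.
have Hk : k %% 4 \in iota 0 4 by rewrite mem_iota /= ltn_mod.
have Hn : exists2 m, m \in iota 0 4 & blockE n = blockE m.
  by case: n => [|[|[|n]]]; [exists 0 | exists 1 | exists 2 | exists 3].
case: Hn => m Hm ->.
by move: blockcheckT => /allP/(_ m Hm)/allP/(_ _ Hk)/allP/(_ x (mem_enumV x))/eqP.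
Qed.

Lemma piece_bal (X : graph) u : good_piece X ->
  \sum_(v : V) ([set u; v] \in X : nat) = \sum_(v : V) ([set (v.1, u.2); (u.1, v.2)] \in X : nat).
Proof.
case=> B [k [HB [p [s iso]]]].
have [n En] : exists n, B = Bof n.
  by case: HB => [->|[->|[->|->]]]; [exists 0 | exists 1 | exists 2 | exists 3].
subst B.
set H := rotation k (Bof n).
transitivity (\sum_(v : V) ([set loc_map p s u; loc_map p s v] \in H : nat)).
  by apply: eq_bigr => v _; rewrite iso.
transitivity (\sum_(w : V) ([set loc_map p s u; w] \in H : nat)).
  by rewrite [RHS](reindex_inj (@lm_inj p s)).
rewrite /H block_bal (reindex_inj (@lm_inj p s)) /=.
by apply: eq_bigr => v _; rewrite iso.
Qed.

Lemma splitG n (X : 'I_n -> graph) (G : graph) :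
  (forall i j, i != j -> [disjoint X i & X j]) -> \bigcup_(i < n) X i = G ->
  forall e, (e \in G : nat) = \sum_(i < n) (e \in X i : nat).
Proof.
move=> D U e; rewrite -U; case: (boolP (e \in _)).
- case/bigcupP=> i _ ei; rewrite (bigD1 i) //= ei big1 // => j ji.
  by rewrite (disjointFl (D j i ji) ei).
- move=> ne; rewrite big1 // => i _; apply/eqP; rewrite eqb0.
  by apply: contra ne => ei; apply/bigcupP; exists i.
Qed.

Lemma backward (G : graph) n (X : 'I_n -> graph) : all_diagonal G ->
  (forall i, good_piece (X i)) ->
  (forall i j, i != j -> [disjoint X i & X j]) -> \bigcup_(i < n) X i = G ->
  degree_criterion G.
Proof.
move=> HG GP D U; apply/critG => // u.
rewrite (eq_bigr _ (fun v _ => splitG D U _)) exchange_big.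
rewrite [RHS](eq_bigr _ (fun v _ => splitG D U _)) [RHS]exchange_big.
by apply: eq_bigr => i _; apply: piece_bal.
Qed.


Lemma chk_sound n acc f : chk n acc f -> forall l, size l = n -> f (l ++ acc).
Proof.
elim: n acc => [|n IH] acc /=; first by move=> H [|].
case/andP=> Ht Hf l; case/lastP: l => [|l b] //; rewrite size_rcons => -[Hl].
by rewrite cat_rcons; case: b; [apply: IH Ht _ Hl | apply: IH Hf _ Hl].
Qed.

Lemma critbf b : size b = 18 -> critb (Eb b) = critf b.
Proof. case: b => [|b0 [|b1 [|b2 [|b3 [|b4 [|b5 [|b6 [|b7 [|b8 [|b9 [|b10 [|b11 [|b12 [|b13 [|b14 [|b15 [|b16 [|b17 [|]]]]]]]]]]]]]]]]]]] // _; apply: critfE. Qed.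

Definition eidcheck : bool :=
  all (fun u => all (fun v => let k := eid (idx u) (idx v) in
    if k < 18 then ((u, v) == nth ((o0,o0),(o0,o0)) DE k) || ((v, u) == nth ((o0,o0),(o0,o0)) DE k)
    else ~~ diag_pair u v) enumV) enumV.
Lemma eidcheckT : eidcheck. Proof. by vm_compute. Qed.

Definition bG (G : graph) : seq bool := [seq [set e.1; e.2] \in G | e <- DE].
Lemma size_bG G : size (bG G) = 18. Proof. by rewrite size_map. Qed.

Lemma EbG G u v : all_diagonal G -> Eb (bG G) u v = ([set u; v] \in G).
Proof.
move=> HG; move: eidcheckT => /allP/(_ u (mem_enumV u))/allP/(_ v (mem_enumV v)) /=.
rewrite /Eb; case: ltnP => Hk.
- rewrite (nth_map ((o0,o0),(o0,o0))) //.
  by case/orP => /eqP <- //=; rewrite setUC.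
- move=> nd; rewrite nth_default ?size_bG //; apply/esym/negbTE.
  by apply: contra nd => /(diag_mem HG).
Qed.

Lemma PTfacts dm : dm \in PT -> size dm.2 = 18 /\ forall u v, EPc dm.1 u v = Eb dm.2 u v.
Proof.
move: PTokT => /allP H /H /andP[/eqP -> /allP H2]; split=> // u v.
by move: (H2 u (mem_enumV u)) => /allP/(_ v (mem_enumV v))/eqP.
Qed.

Lemma count2 (T : Type) (x0 : T) (P : pred T) s i j : i < size s -> j < size s -> i != j ->
  P (nth x0 s i) -> P (nth x0 s j) -> 1 < count P s.
Proof.
move=> Hi Hj ij Pi Pj; rewrite -sum_count (big_nth x0) big_mkord.
rewrite (bigD1 (Ordinal Hi)) //= Pi (bigD1 (Ordinal Hj)) /= ?Pj //.
by rewrite -val_eqE /= eq_sym.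
Qed.

Lemma lmE d u : loc_map (Pp d.1.2) (Pp d.2) u = lmc d u.
Proof. by rewrite /loc_map /lmc !permE. Qed.

Definition Xof (G : graph) (dm : desc * seq bool) : graph :=
  [set e in G | (loc_map (Pp dm.1.1.2) (Pp dm.1.2) @: e) \in rotation dm.1.1.1.2 (Bof dm.1.1.1.1)].

Lemma memXH d u v : ([set loc_map (Pp d.1.2) (Pp d.2) u; loc_map (Pp d.1.2) (Pp d.2) v]
   \in rotation d.1.1.2 (Bof d.1.1.1)) = EPc d u v.
Proof. by rewrite memH !lmE. Qed.


Lemma forward (G : graph) : all_diagonal G -> degree_criterion G ->
   exists (n : nat) (X : 'I_n -> graph),
     (forall i, good_piece (X i)) /\
     (forall i j, i != j -> [disjoint X i & X j]) /\
     \bigcup_(i < n) X i = G.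
Proof.
move=> HG Hc.
have crit : critb (Eb (bG G)).
  apply/allP => u _; apply/eqP; rewrite -!sumV.
  under eq_bigr do rewrite EbG //.
  under [RHS]eq_bigr do rewrite EbG //.
  exact: (critG HG).1 Hc u.
have := chk_sound bigcheck (size_bG G); rewrite cats0 /leaf -critbf ?size_bG // crit.
case E: decomp => [L|] // /andP[/allP inPT /allP cnt].
have covE u v : count (fun dm => Eb dm.2 u v) L = Eb (bG G) u v.
  rewrite /Eb; case: (ltnP (eid (idx u) (idx v)) 18) => Hk.
  - by apply/eqP/cnt; rewrite mem_iota.
  - rewrite (@nth_default _ false (bG G)) ?size_bG //; apply/eqP; rewrite eqn0Ngt -has_count.
    apply/hasPn => dm /inPT /PTfacts [Hs _]; by rewrite nth_default ?Hs.
have memX dm u v : dm \in L -> ([set u; v] \in Xof G dm) = Eb dm.2 u v.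
  move=> dmL; have [_ HE] := PTfacts (inPT _ dmL).
  rewrite inE imset_pair memXH HE; apply: andb_idl => Huv.
  rewrite -EbG // -(lt0b (Eb (bG G) u v)) -covE -has_count; apply/hasP; by exists dm.
set dm0 : desc * seq bool := ((0,0,0,0), [::]).
exists (size L), (fun i : 'I_(size L) => Xof G (nth dm0 L i)); split; [|split].
- move=> i; set d := nth dm0 L i.
  have dL : d \in L by rewrite mem_nth.
  exists (Bof d.1.1.1.1), d.1.1.1.2; split.
    rewrite /is_block; case: (d.1.1.1.1) => [|[|[|m]]] /=; tauto.
  exists (Pp d.1.1.2), (Pp d.1.2) => u v.
  have [_ HE] := PTfacts (inPT _ dL).
  by rewrite memX // memXH HE.
- move=> i j ij; rewrite -setI_eq0; apply/eqP/setP => e; rewrite in_setI in_set0.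
  apply/negbTE/negP => /andP[ei ej].
  have eG : e \in G by move: ei; rewrite inE => /andP[].
  have [u [v [Ee _]]] := HG e eG; subst e.
  rewrite memX ?mem_nth // in ei; rewrite memX ?mem_nth // in ej.
  have := count2 (P := fun dm => Eb dm.2 u v) (ltn_ord i) (ltn_ord j) ij ei ej.
  by rewrite covE; case: (Eb _ u v).
- apply/setP => e; apply/bigcupP/idP.
  + by case=> i _; rewrite inE => /andP[].
  + move=> eG; have [u [v [Ee _]]] := HG e eG; subst e.
    move: eG; rewrite -EbG // -(lt0b (Eb (bG G) u v)) -covE -has_count => /(has_nthP dm0) [i Hi Hiuv].
    exists (Ordinal Hi) => //; by rewrite memX ?mem_nth.
Qed.

Unset Implicit Arguments.

Theorem mainTheorem15 (G : graph) :
  simple_graph G -> all_diagonal G ->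
  (degree_criterion G <->
   exists (n : nat) (X : 'I_n -> graph),
     (forall i, good_piece (X i)) /\
     (forall i j, i != j -> [disjoint X i & X j]) /\
     \bigcup_(i < n) X i = G).
Proof.
move=> _ HG; split; first exact: forward.
by case=> n [X [GP [D U]]]; apply: backward GP D U.
Qed.
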